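(* A mixed graph $G=(V,D,B)$ is HTC-infinite-to-one if and only if the maximum flow in the network $G_{\mathrm{flow}}$ defined below has size strictly less than $|D|=\sum_{v\in V}|\mathrm{pa}(v)|$.
   Context: A mixed graph is $G=(V,D,B)$ with $V=[m]$, $D$ directed edges $v\to w$, $B$ symmetric bidirected edges $v\leftrightarrow w$, no self-loops. $\mathrm{pa}(v)=\{w:w\to v\in D\}$, $\mathrm{sib}(v)=\{w:w\leftrightarrow v\in B\}$. A half-trek from $y$ to $w$ is a path $y\leftrightarrow w_0\to w_1\to\cdots\to w_r=w$ (left side $\{y\}$, right side $\{w_0,\dots,w_r\}$) or $y\to w_1\to\cdots\to w_r=w$, $r\ge0$ (left side $\{y\}$, right side $\{y,w_1,\dots,w_r\}$); nodes may repeat. A system of half-treks from $X$ to $Y$: half-treks with distinct sources forming $X$ and distinct targets forming $Y$; no sided intersection: pairwise disjoint left sides and pairwise disjoint right sides. $Y$ satisfies the half-trek criterion w.r.t. $v$ if $|Y|=|\mathrm{pa}(v)|$, $Y\cap(\{v\}\cup\mathrm{sib}(v))=\emptyset$, and there is a system of half-treks with no sided intersection from $Y$ to $\mathrm{pa}(v)$. $G$ is HTC-infinite-to-one if every family $(Y_v:v\in V)$ of subsets of $V$ either contains some $Y_v$ that fails the half-trek criterion w.r.t. $v$ or contains a pair $Y_v,Y_w$ with $v\in Y_w$ and $w\in Y_v$. Flows: in a directed graph with source $s$, sink $t$, node and edge capacities, a flow is a nonnegative edge function respecting edge capacities and, at each node $x\neq s,t$, conservation $\sum_u f(u,x)=\sum_w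 f(x,w)$ with this value at most the node capacity; its size is the total flow out of $s$. The network $G_{\mathrm{flow}}$ has nodes $s,t$, a node $L\{v,w\}$ for each unordered pair of distinct $v,w\in V$ with $v\leftrightarrow w\notin B$, and a node $R_v(w)$ for each $(v,w)\in V\times V$. Its edges are: $s\to L\{v,w\}$, $L\{v,w\}\to R_v(w)$ (and, by symmetry of the unordered pair, $L\{v,w\}\to R_w(v)$) for each such pair; $L\{v,w\}\to R_v(u)$ for all $v\ne w$ with $v\leftrightarrow w\notin B$ and $w\leftrightarrow u\in B$; $R_v(w)\to R_v(u)$ for all $v\in V$ and $w\to u\in D$; and $R_v(w)\to t$ for all $v\in V$, $w\in\mathrm{pa}(v)$. All edges and the nodes $s,t$ have capacity $\infty$; all other nodes have capacity $1$. *)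

(* Defs.v *)
From HB Require Import structures.
From mathcomp Require Import all_boot all_order all_algebra.
Set Implicit Arguments. Unset Strict Implicit. Unset Printing Implicit Defensive.
Import Order.TTheory GRing.Theory Num.Theory.

(* A mixed graph on V = 'I_m : D w v means the directed edge w -> v,
   B v w means the bidirected edge v <-> w (symmetric, irreflexive). *)
Section MixedGraph.
Variable m : nat.
Variables (D B : rel 'I_m).

Definition pa (v : 'I_m) : {set 'I_m} := [set w | D w v].
Definition sib (v : 'I_m) : {set 'I_m} := [set w | B w v].

(* A half-trek with source y is encoded as (bi, h, p):
   - bi = true  : y <-> h -> p_1 -> ... -> p_r   (right side {h, p_1..p_r})
   - bi = false : h = y, y -> p_1 -> ... -> p_r  (right side {y, p_1..p_r})
   Left side is {y}; target is the last node; nodes may repeat. *)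
Definition halftrek := (bool * 'I_m * seq 'I_m)%type.
Definition ht_right (t : halftrek) : seq 'I_m := t.1.2 :: t.2.
Definition ht_target (t : halftrek) : 'I_m := last t.1.2 t.2.
Definition is_halftrek (y : 'I_m) (t : halftrek) : bool :=
  path D t.1.2 t.2 && (if t.1.1 then B y t.1.2 else t.1.2 == y).

Definition halftrek_system (X Y : {set 'I_m}) : Prop :=
  exists T : 'I_m -> halftrek,
    [/\ forall y, y \in X -> is_halftrek y (T y),
        {in X &, injective (fun y => ht_target (T y))},
        [set ht_target (T y) | y in X] = Y &
        forall y y', y \in X -> y' \in X -> y != y' ->
          [disjoint pred1 y & pred1 y'] /\
          [disjoint ht_right (T y) & ht_right (T y')]].

Definition HTC (Y : {set 'I_m}) (v : 'I_m) : Prop :=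
  [/\ #|Y| = #|pa v|, Y :&: (v |: sib v) = set0 & halftrek_system Y (pa v)].

Definition HTC_infinite_to_one : Prop :=
  forall Yf : 'I_m -> {set 'I_m},
    (exists v, ~ HTC (Yf v) v) \/
    (exists v w, [/\ v != w, v \in Yf w & w \in Yf v]).

(* Nodes: s, t, L{v,w} (encoded as the ordered
   pair (v,w) with v < w; pairs with v >= w or v <-> w in B are isolated dummy
   nodes without incident edges), and R_v(w) for all (v,w). *)
Definition fnode := ((unit + unit) + (('I_m * 'I_m) + ('I_m * 'I_m)))%type.
Definition fs : fnode := inl (inl tt).
Definition ft : fnode := inl (inr tt).
Definition fL (v w : 'I_m) : fnode := inr (inl (v, w)).
Definition fR (v w : 'I_m) : fnode := inr (inr (v, w)).

Definition L_valid (v w : 'I_m) : bool := (v < w)%N && ~~ B v w.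

Definition fedge (x y : fnode) : bool :=
  match x, y with
  | inl (inl _), inr (inl (v, w)) => L_valid v w                (* s -> L{v,w} *)
  | inr (inl (v, w)), inr (inr (a, b)) =>                        (* L{v,w} -> R_a(b) *)
      L_valid v w &&
      (((a == v) && ((b == w) || B w b)) || ((a == w) && ((b == v) || B v b)))
  | inr (inr (v, w)), inr (inr (a, u)) => (a == v) && D w u      (* R_v(w) -> R_v(u) *)
  | inr (inr (v, w)), inl (inr _) => w \in pa v                  (* R_v(w) -> t *)
  | _, _ => false
  end.

Local Open Scope ring_scope.

(* Flows: nonnegative, zero off edges (edge capacities are infinite),
   conservation at every node other than s,t with throughput <= 1. *)
Definition is_flow (R : realFieldType) (f : fnode -> fnode -> R) : Prop :=
  [/\ forall x y, 0 <= f x y,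
      forall x y, ~~ fedge x y -> f x y = 0 &
      forall x, x != fs -> x != ft ->
        (\sum_(u : fnode) f u x = \sum_(w : fnode) f x w) /\
        (\sum_(u : fnode) f u x <= 1)].

Definition flow_size (R : realFieldType) (f : fnode -> fnode -> R) : R :=
  \sum_(w : fnode) f fs w.

Definition is_max_flow (R : realFieldType) (f : fnode -> fnode -> R) : Prop :=
  is_flow f /\ forall g : fnode -> fnode -> R, is_flow g -> flow_size g <= flow_size f.

End MixedGraph.

(* Main.v *)
Require Import Defs.
From HB Require Import structures.
From mathcomp Require Import all_boot all_order all_algebra.
From mathcomp Require Import lra.
From Stdlib Require Classical ClassicalEpsilon.
Import Order.TTheory GRing.Theory Num.Theory.
Set Implicit Arguments. Unset Strict Implicit. Unset Printing Implicit Defensive.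

Lemma fchoice (A B : Type) (Q : A -> B -> Prop) :
  (forall a, exists b, Q a b) -> exists f : A -> B, forall a, Q a (f a).
Proof.
move=> H; exists (fun a => proj1_sig (ClassicalEpsilon.constructive_indefinite_description _ (H a))).
move=> a; exact: proj2_sig (ClassicalEpsilon.constructive_indefinite_description _ (H a)).
Qed.

Lemma min_ex (P : nat -> Prop) n : P n -> exists n0, P n0 /\ forall k, P k -> n0 <= k.
Proof.
elim: n {-2}n (leqnn n) => [|n IH] j hj Pj.
  by exists j; split => // k _; move: hj; rewrite leqn0 => /eqP ->.
case: (Classical_Prop.classic (exists k, k < j /\ P k)) => [[k [hk Pk]]|hno].
  by apply: (IH k) => //; rewrite -ltnS (leq_trans hk hj).
exists j; split => // k Pk; rewrite leqNgt; apply/negP => hk; apply: hno; by exists k.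
Qed.

Section Menger.
Variable N : finType.
Implicit Types (E : rel N) (A B S T K : {set N}).

Definition verts (w : N * seq N) := w.1 :: w.2.
Definition wAB E A B (w : N * seq N) :=
  [&& w.1 \in A, path E w.1 w.2 & last w.1 w.2 \in B].
Definition sepAB E A B S :=
  forall w, wAB E A B w -> exists2 z, z \in verts w & z \in S.
Definition systemAB E A B K (P : N -> N * seq N) :=
  (forall k, k \in K -> wAB E A B (P k)) /\
  (forall k k' z, k \in K -> k' \in K -> z \in verts (P k) -> z \in verts (P k') -> k = k').
Definition erel (F : {set N * N}) : rel N := [rel x y | (x, y) \in F].

Lemma weak_dual E A B K P T : systemAB E A B K P -> sepAB E A B T -> #|K| <= #|T|.
Proof.
move=> [hw hd] hT.
pose f k := odflt k [pick z in T | z \in verts (P k)].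
have hf k : k \in K -> f k \in T /\ f k \in verts (P k).
  move=> kK; rewrite /f; case: pickP => [z /andP[]//|hn].
  have [z z1 z2] := hT _ (hw _ kK); by move: (hn z); rewrite z1 z2.
have -> : #|K| = #|f @: K|.
  rewrite card_in_imset // => k k' kK k'K e; apply: (hd k k' (f k)) => //.
    by case: (hf _ kK).
  by rewrite e; case: (hf _ k'K).
apply: subset_leq_card; apply/subsetP => z /imsetP [k kK ->]; by case: (hf _ kK).
Qed.

Lemma min_sep E A B : exists S, sepAB E A B S /\ forall T, sepAB E A B T -> #|S| <= #|T|.
Proof.
have hB : sepAB E A B B.
  by move=> w hw; exists (last w.1 w.2); [exact: mem_last| case/and3P: hw].
have [n [[S [hS <-]] hmin]] := @min_ex (fun n => exists S, sepAB E A B S /\ #|S| = n) #|B|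
  (ex_intro _ B (conj hB erefl)).
exists S; split => // T hT; apply: hmin; by exists T.
Qed.

Lemma wAB_sub E E' A B w : subrel E E' -> wAB E A B w -> wAB E' A B w.
Proof. by move=> h /and3P[a b c]; rewrite /wAB a c (sub_path h b). Qed.

Lemma trim_end E (X : {set N}) x q : path E x q -> has (mem X) (x :: q) ->
  exists q', [/\ path E x q', last x q' \in X, {subset q' <= q} &
              all (fun z => z \notin X) (belast x q')].
Proof.
elim: q x => [|y q IH] x /=.
  by rewrite orbF => _ hx; exists [::].
move=> /andP[exy hp]; case hx: (x \in X) => /= hh.
  by exists [::]; split.
have [q' [h1 h2 h3 h4]] := IH y hp hh.
exists (y :: q'); split => //=; first by rewrite exy.
  by move=> z; rewrite !inE => /orP[->//|/h3 ->]; rewrite orbT.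
by rewrite hx.
Qed.

Lemma trim_start E (X : {set N}) x q : path E x q -> has (mem X) (x :: q) ->
  exists x' q', [/\ x' \in X, path E x' q', last x' q' = last x q,
                 {subset x' :: q' <= x :: q} & all (fun z => z \notin X) q'].
Proof.
elim: q x => [|y q IH] x /=.
  by rewrite orbF => _ hx; exists x, [::]; split.
move=> /andP[exy hp] hh; case hq: (has (mem X) (y :: q)).
  have [x' [q' [h1 h2 h3 h4 h5]]] := IH y hp hq.
  exists x', q'; split => //; move=> z /h4; rewrite !inE => ->; by rewrite orbT.
have hx : x \in X by move: hh; rewrite /= -/(has (mem X) (y :: q)) hq orbF.
exists x, (y :: q); split => //; first by rewrite /= exy.
apply/allP => z zq; apply/negP => zX; move/negbT/hasPn: hq => /(_ z zq) /negP; apply; exact: zX.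
Qed.

Lemma avoid_x (F : {set N * N}) x y a q : path (erel F) a q -> x \notin belast a q ->
  path (erel (F :\ (x, y))) a q.
Proof.
elim: q a => [|v q IH] a // /= /andP[h1 h2].
rewrite in_cons negb_or => /andP[ha hb].
rewrite IH // andbT /erel /= !inE; rewrite /erel /= in h1; rewrite h1 andbT.
apply/negP => /eqP[] ax _; by rewrite ax eqxx in ha.
Qed.

Lemma avoid_y (F : {set N * N}) x y a q : path (erel F) a q -> y \notin q ->
  path (erel (F :\ (x, y))) a q.
Proof.
elim: q a => [|v q IH] a // /= /andP[h1 h2].
rewrite in_cons negb_or => /andP[ha hb].
rewrite IH // andbT /erel /= !inE; rewrite /erel /= in h1; rewrite h1 andbT.
apply/negP => /eqP[] _ vy; by rewrite vy eqxx in ha.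
Qed.

Lemma erel_sub (F F' : {set N * N}) : F' \subset F -> subrel (erel F') (erel F).
Proof. by move=> /subsetP h x y /=; apply: h. Qed.

Definition MengerP (F : {set N * N}) := forall A B, exists S K P,
  [/\ sepAB (erel F) A B S, systemAB (erel F) A B K P & #|S| <= #|K|].

Lemma menger0 : MengerP set0.
Proof.
move=> A B; exists (A :&: B), (A :&: B), (fun z => (z, [::])); split => //.
- move=> [a [|v q]] /and3P[/= ha hp hb].
    by exists a; [exact: mem_head | rewrite inE ha; exact: hb].
  by move: hp => /= /andP[]; rewrite /erel /= inE.
- split.
    by move=> k; rewrite inE => /andP[h1 h2]; rewrite /wAB /= h1 h2.
  by move=> k k' z _ _; rewrite !inE => /eqP -> /eqP.
Qed.

Lemma wABI E A B a q : a \in A -> path E a q -> last a q \in B -> wAB E A B (a, q).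
Proof. by rewrite /wAB /= => -> -> ->. Qed.

Lemma menger F : MengerP F.
Proof.
move: {2}#|F| (leqnn #|F|) => n; elim: n F => [|n IH] F hF.
  by move: hF; rewrite leqn0 => /eqP/cards0_eq ->; exact: menger0.
case: (set_0Vmem F) => [-> | [[x y] exy]]; first exact: menger0.
set F' := F :\ (x, y).
have hF' : #|F'| <= n by move: hF; rewrite (cardsD1 (x,y) F) exy add1n ltnS.
set E := erel F; set E' := erel F'.
have sEE : subrel E' E by apply: erel_sub; apply: subsetDl.
move=> A B.
have [S' [K' [P' [sepS' sysP' cS']]]] := IH F' hF' A B.
have [S0 [sepS0 minS0]] := min_sep E A B.
have sysP'E : systemAB E A B K' P'.
  by case: sysP' => h1 h2; split => // k kK; apply: wAB_sub sEE (h1 k kK).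
have hK' := weak_dual sysP'E sepS0.
case: (leqP #|S0| #|K'|) => hlt.
  by exists S0, K', P'; split.
set X1 := x |: S'; set X2 := y |: S'.
have sepX1 : sepAB E A B X1.
  move=> [a q] hw; case hh: (has (mem X1) (a :: q)).
    by case/hasP: hh => z z1 z2; exists z.
  case/and3P: hw => /= ha hp hl.
  have hp' : path E' a q.
    apply: avoid_x hp _.
    apply/negP => /mem_belast hx; move/negbT/hasPn: hh => /(_ x hx) /negP; apply.
    by rewrite !inE eqxx.
  have [z z1 z2] := sepS' (a, q) (wABI ha hp' hl).
  move/negbT/hasPn: hh => /(_ z z1) /negP; case; by rewrite !inE z2 orbT.
have sepX2 : sepAB E A B X2.
  move=> [a q] hw; case hh: (has (mem X2) (a :: q)).
    by case/hasP: hh => z z1 z2; exists z.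
  case/and3P: hw => /= ha hp hl.
  have hp' : path E' a q.
    apply: avoid_y hp _.
    apply/negP => hy; move/negbT/hasPn: hh => /(_ y (mem_behead (s := a :: q) hy)) /negP; apply.
    by rewrite !inE eqxx.
  have [z z1 z2] := sepS' (a, q) (wABI ha hp' hl).
  move/negbT/hasPn: hh => /(_ z z1) /negP; case; by rewrite !inE z2 orbT.
have m1 := minS0 _ sepX1; have m2 := minS0 _ sepX2.
have hS'lt : #|S'| < #|S0| := leq_ltn_trans cS' hlt.
have xS' : x \notin S'.
  apply/negP => xS; move: m1; by rewrite cardsU1 xS /= add0n leqNgt hS'lt.
have yS' : y \notin S'.
  apply/negP => yS; move: m2; by rewrite cardsU1 yS /= add0n leqNgt hS'lt.
have eX1 : #|X1| = #|S0|.
  by apply/eqP; rewrite eqn_leq m1 andbT cardsU1 xS' add1n.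
have eX2 : #|X2| = #|S0|.
  by apply/eqP; rewrite eqn_leq m2 andbT cardsU1 yS' add1n.
have [T1 [K1 [P1 [sepT1 sysP1 cT1]]]] := IH F' hF' A X1.
have sepT1E : sepAB E A B T1.
  move=> [a q] hw; case/and3P: (hw) => /= ha hp hl.
  have [z z1 z2] := sepX1 _ hw.
  have hh : has (mem X1) (a :: q) by apply/hasP; exists z.
  have [q' [p1 p2 p3 p4]] := trim_end hp hh.
  have hp' : path E' a q'.
    apply: avoid_x p1 _; apply/negP => hx; move/allP: p4 => /(_ x hx).
    by rewrite !inE eqxx.
  have [u u1 u2] := sepT1 (a, q') (wABI ha hp' p2).
  exists u => //; move: u1; rewrite /verts /= !inE => /orP[->//|/p3 ->]; by rewrite orbT.
have kT1 : #|S0| <= #|K1| := leq_trans (minS0 _ sepT1E) cT1.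
have [T2 [K2 [P2 [sepT2 sysP2 cT2]]]] := IH F' hF' X2 B.
have sepT2E : sepAB E A B T2.
  move=> [a q] hw; case/and3P: (hw) => /= ha hp hl.
  have [z z1 z2] := sepX2 _ hw.
  have hh : has (mem X2) (a :: q) by apply/hasP; exists z.
  have [b [q' [p1 p2 p3 p4 p5]]] := trim_start hp hh.
  have hp' : path E' b q'.
    apply: avoid_y p2 _; apply/negP => hy; move/allP: p5 => /(_ y hy).
    by rewrite !inE eqxx.
  have hl' : last b q' \in B by rewrite p3.
  have [u u1 u2] := sepT2 (b, q') (wABI p1 hp' hl').
  by exists u => //; apply: p4.
have kT2 : #|S0| <= #|K2| := leq_trans (minS0 _ sepT2E) cT2.
have : forall k, exists w, k \in K1 ->
   [/\ wAB E' A X1 w, {subset verts w <= verts (P1 k)} &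
       all (fun z => z \notin X1) (belast w.1 w.2)].
  move=> k; case: (boolP (k \in K1)) => kK; last by exists (k, [::]).
  case: sysP1 => h1 _; case/and3P: (h1 k kK) => ha hp hl.
  have hh : has (mem X1) ((P1 k).1 :: (P1 k).2).
    by apply/hasP; exists (last (P1 k).1 (P1 k).2); [exact: mem_last|].
  have [q' [p1 p2 p3 p4]] := trim_end hp hh.
  exists ((P1 k).1, q') => _; split => //; first exact: wABI.
  by move=> z; rewrite /verts /= !inE => /orP[->//|/p3 ->]; rewrite orbT.
move/fchoice => [P1' hP1'].
have : forall k, exists w, k \in K2 ->
   [/\ wAB E' X2 B w, {subset verts w <= verts (P2 k)} &
       all (fun z => z \notin X2) w.2].
  move=> k; case: (boolP (k \in K2)) => kK; last by exists (k, [::]).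
  case: sysP2 => h1 _; case/and3P: (h1 k kK) => ha hp hl.
  have hh : has (mem X2) ((P2 k).1 :: (P2 k).2) by rewrite /= ha.
  have [b [q' [p1 p2 p3 p4 p5]]] := trim_start hp hh.
  exists (b, q') => _; split => //; first by apply: wABI => //; rewrite p3.
move/fchoice => [P2' hP2'].
have hd1 : forall k k' z, k \in K1 -> k' \in K1 -> z \in verts (P1' k) ->
    z \in verts (P1' k') -> k = k'.
  move=> k k' z kK k'K z1 z2; case: sysP1 => _ h; apply: (h k k' z) => //.
    by case: (hP1' k kK) => _ /(_ z z1).
  by case: (hP1' k' k'K) => _ /(_ z z2).
have hd2 : forall k k' z, k \in K2 -> k' \in K2 -> z \in verts (P2' k) ->
    z \in verts (P2' k') -> k = k'.
  move=> k k' z kK k'K z1 z2; case: sysP2 => _ h; apply: (h k k' z) => //.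
    by case: (hP2' k kK) => _ /(_ z z1).
  by case: (hP2' k' k'K) => _ /(_ z z2).
pose end1 k := last (P1' k).1 (P1' k).2.
pose head2 k := (P2' k).1.
have cover1 : forall z, z \in X1 -> exists2 k, k \in K1 & end1 k = z.
  have inj : {in K1 &, injective end1}.
    move=> k k' kK k'K e; apply: (hd1 k k' (end1 k)) => //; first exact: mem_last.
    by rewrite e; exact: mem_last.
  have sub : end1 @: K1 \subset X1.
    by apply/subsetP => z /imsetP[k kK ->]; case: (hP1' k kK) => /and3P[_ _ ->].
  have eq : end1 @: K1 = X1.
    by apply/eqP; rewrite eqEcard sub /= card_in_imset // eX1.
  by move=> z; rewrite -eq => /imsetP[k kK ->]; exists k.
have cover2 : forall z, z \in X2 -> exists2 k, k \in K2 & head2 k = z.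
  have inj : {in K2 &, injective head2}.
    move=> k k' kK k'K e; apply: (hd2 k k' (head2 k)) => //; first exact: mem_head.
    by rewrite e; exact: mem_head.
  have sub : head2 @: K2 \subset X2.
    by apply/subsetP => z /imsetP[k kK ->]; case: (hP2' k kK) => /and3P[-> _ _].
  have eq : head2 @: K2 = X2.
    by apply/eqP; rewrite eqEcard sub /= card_in_imset // eX2.
  by move=> z; rewrite -eq => /imsetP[k kK ->]; exists k.
have : forall z, exists k, z \in X1 -> k \in K1 /\ end1 k = z.
  move=> z; case: (boolP (z \in X1)) => zX; last by exists z.
  by have [k ? ?] := cover1 z zX; exists k.
move/fchoice => [g1 hg1].
have : forall z, exists k, z \in X2 -> k \in K2 /\ head2 k = z.
  move=> z; case: (boolP (z \in X2)) => zX; last by exists z.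
  by have [k ? ?] := cover2 z zX; exists k.
move/fchoice => [g2 hg2].
have KL : forall k1 k2 v, k1 \in K1 -> k2 \in K2 -> v \in verts (P1' k1) ->
    v \in verts (P2' k2) -> [/\ v \in S', v = end1 k1 & v = head2 k2].
  move=> k1 k2 v kK1 kK2.
  case: (hP1' k1 kK1) => /and3P[ha hp1 hl1] _ hb1.
  case: (hP2' k2 kK2) => /and3P[hb hp2 hl2] _ hb2.
  rewrite /verts /end1 /head2.
  move: ha hp1 hl1 hb1 hb hp2 hl2 hb2.
  case: (P1' k1) => a q1; case: (P2' k2) => b q2 /= ha hp1 hl1 hb1 hb hp2 hl2 hb2 v1 v2.
  have vS : v \in S'.
    move: (v1) hp1 hb1 => /splitPl [p1 p2 lp1].
    rewrite cat_path belast_cat all_cat => /andP[hp1a _] /andP[hb1a _].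
    move: (v2) hp2 hb2 hl2 => /splitPl [r1 r2 lr1].
    rewrite cat_path all_cat => /andP[_ hp2b] /andP[_ hb2b] hl2'.
    rewrite lr1 in hp2b.
    have hw : wAB E' A B (a, p1 ++ r2).
      apply: wABI ha _ _; first by rewrite cat_path hp1a lp1.
      by rewrite last_cat lp1 -lr1 -last_cat.
    have [u u1 u2] := sepS' _ hw.
    move: u1; rewrite /verts /= -cat_cons mem_cat => /orP[|ur2].
      rewrite (lastI a p1) mem_rcons inE lp1 => /orP[/eqP uv|ub]; first by rewrite -uv.
      by move/allP: hb1a => /(_ u ub); rewrite !inE u2 orbT.
    by move/allP: hb2b => /(_ u ur2); rewrite !inE u2 orbT.
  split => //.
    move: v1; rewrite (lastI a q1) mem_rcons inE => /orP[/eqP //|vb].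
    by move/allP: hb1 => /(_ v vb); rewrite !inE vS orbT.
  move: v2; rewrite inE => /orP[/eqP //| vq].
  by move/allP: hb2 => /(_ v vq); rewrite !inE vS orbT.
pose sig z := if z == x then y else z.
have hsig : forall z, z \in X1 -> sig z \in X2.
  move=> z; rewrite /sig !inE; case: (z =P x) => [_|_] /=; first by rewrite eqxx.
  by move=> ->; rewrite orbT.
have sig_inj : forall z z', z \in X1 -> z' \in X1 -> sig z = sig z' -> z = z'.
  move=> z z' zX z'X; rewrite /sig.
  have hS : forall w, w \in X1 -> w != x -> w \in S'.
    by move=> w; rewrite !inE => /orP[->|].
  case: eqP => zx; case: eqP => z'x //.
  - by rewrite zx z'x.
  - move=> yz'; have := hS z' z'X (introN eqP z'x); rewrite -yz' => yS.
    by rewrite yS in yS'.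
  - move=> zy; have := hS z zX (introN eqP zx); rewrite zy => yS.
    by rewrite yS in yS'.
pose G z := ((P1' (g1 z)).1, (P1' (g1 z)).2 ++
   (if z == x then verts (P2' (g2 (sig z))) else (P2' (g2 (sig z))).2)).
exists X1, X1, G; split => //; split.
  move=> z zX; have [gk ge] := hg1 z zX; have [gk2 ge2] := hg2 (sig z) (hsig z zX).
  case: (hP1' _ gk) => /and3P[ha hp1 hl1] _ _.
  case: (hP2' _ gk2) => /and3P[hb hp2 hl2] _ _.
  rewrite /G /verts; move: ge ge2 ha hp1 hl1 hb hp2 hl2; rewrite /end1 /head2.
  case: (P1' (g1 z)) => a q1; case: (P2' (g2 (sig z))) => b q2 /= ge ge2 ha hp1 hl1 hb hp2 hl2.
  apply: wABI => //.
    rewrite cat_path (sub_path sEE hp1) ge /=; case: ifP => zx /=.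
      move/eqP: zx => zx; rewrite (sub_path sEE hp2) andbT ge2 /sig zx eqxx; exact: exy.
    rewrite ge2 /sig zx in hp2; exact: (sub_path sEE hp2).
  rewrite last_cat ge; case: ifP => zx //=.
  by move: hl2; rewrite ge2 /sig zx.
move=> z z' u zX z'X.
have memG : forall w, u \in verts (G w) ->
    u \in verts (P1' (g1 w)) \/ u \in verts (P2' (g2 (sig w))).
  move=> w; rewrite /verts /G /= -cat_cons mem_cat => /orP[h|h]; [by left|right].
  by move: h; case: ifP => // _ h; rewrite inE h orbT.
have [gk ge] := hg1 z zX; have [gk2 ge2] := hg2 (sig z) (hsig z zX).
have [gk' ge'] := hg1 z' z'X; have [gk2' ge2'] := hg2 (sig z') (hsig z' z'X).
move=> /memG [h1|h1] /memG [h2|h2].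
- by rewrite -ge -ge' (hd1 _ _ _ gk gk' h1 h2).
- have [uS ue uh] := KL _ _ _ gk gk2' h1 h2.
  have e1 : u = sig z' by rewrite uh ge2'.
  have e2 : u = z by rewrite ue ge.
  move: e1; rewrite e2 /sig; case: ifP => [_ zy|_ ->//].
  by move: uS; rewrite e2 zy => yS; rewrite yS in yS'.
- have [uS ue uh] := KL _ _ _ gk' gk2 h2 h1.
  have e1 : u = sig z by rewrite uh ge2.
  have e2 : u = z' by rewrite ue ge'.
  move: e1; rewrite e2 /sig; case: ifP => [_ zy|_ ->//].
  by move: uS; rewrite e2 zy => yS; rewrite yS in yS'.
- apply: sig_inj => //; by rewrite -ge2 -ge2' (hd2 _ _ _ gk2 gk2' h1 h2).
Qed.

End Menger.

Section GFlow.
Variable N : finType.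
Variable e : rel N.
Variables s t : N.
Hypothesis hs : forall x, ~~ e x s.
Hypothesis ht : forall y, ~~ e t y.
Hypothesis hst : ~~ e s t.
Hypothesis snt : s != t.
Local Notation A := [set a | e s a].
Local Notation B := [set b | e b t].

Lemma path_pred (P : pred N) a q : path [rel x y | e x y && P y] a q -> all P q.
Proof. by elim: q a => [|v q IH] a //= /andP[/andP[_ ->] /IH]. Qed.

Lemma path_target a q z : path e a q -> z \in q -> exists x, e x z.
Proof.
elim: q a => [|v q IH] a //= /andP[h1 h2]; rewrite inE => /orP[/eqP ->|zq].
  by exists a.
exact: IH h2 zq.
Qed.

Lemma path_sink a q z : path e a q -> z \in a :: q -> (forall y, ~~ e z y) -> z = last a q.
Proof.
elim: q a => [|v q IH] a /=; first by rewrite inE => _ /eqP.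
move=> /andP[h1 h2]; rewrite inE => /orP[/eqP za|zq] hz.
  by move: (hz v); rewrite za h1.
exact: IH h2 zq hz.
Qed.

Lemma walk_nost w : wAB e A B w -> s \notin verts w /\ t \notin verts w.
Proof.
case: w => a q /and3P[ha hp hl]; rewrite /= !inE in ha hl; split.
  rewrite /verts /= inE negb_or; apply/andP; split.
    by apply/negP => /eqP as_; move: ha; rewrite -as_ (negbTE (hs s)).
  by apply/negP => /(path_target hp) [x]; rewrite (negbTE (hs x)).
apply/negP => /(path_sink hp) => /(_ ht) tl.
by move: hl; rewrite -tl (negbTE (ht t)).
Qed.

Variable R : realFieldType.
Local Open Scope ring_scope.

Definition gflow (f : N -> N -> R) : Prop :=
  [/\ forall x y, 0 <= f x y, forall x y, ~~ e x y -> f x y = 0 &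
      forall x, x != s -> x != t ->
        (\sum_(u : N) f u x = \sum_(w : N) f x w) /\ (\sum_(u : N) f u x <= 1)].

Lemma cut_bound f S : gflow f -> sepAB e A B S -> \sum_(w : N) f s w <= #|S|%:R.
Proof.
move=> [f0 fe fc] hS.
set S2 := S :\ s :\ t.
have hS2 : sepAB e A B S2.
  move=> w hw; have [z z1 z2] := hS w hw; have [ns nt] := walk_nost hw.
  exists z => //; rewrite !inE z2 andbT; apply/andP; split.
    by apply/negP => /eqP zt; rewrite -zt z1 in nt.
  by apply/negP => /eqP zs; rewrite -zs z1 in ns.
pose e' := [rel x y | e x y && (y \notin S2)].
set Z := [set z | connect e' s z].
have sZ : s \in Z by rewrite inE connect0.
have tZ : t \notin Z.
  rewrite inE; apply/negP => /connectP [p hp tl].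
  case/lastP: p hp tl => [|p lt]; first by move=> _ ts; move: snt; rewrite ts eqxx.
  rewrite last_rcons rcons_path => /andP[hp hlt] tl; rewrite -tl in hlt.
  case: p hp hlt => [|a q] /=; first by move=> _ /andP[h _]; move: hst; rewrite h.
  move=> /andP[/andP[ha haS] hq] /andP[hl _].
  have hw : wAB e A B (a, q).
    apply: wABI; rewrite ?inE //; apply: (sub_path _ hq) => x y /andP[] //.
  have [z z1 z2] := hS2 _ hw.
  move: z1; rewrite /verts /= inE => /orP[/eqP za|zq].
    by rewrite -za z2 in haS.
  by move/allP: (path_pred hq) => /(_ z zq); rewrite z2.
have hzero : forall z w, z \in Z -> w \notin Z -> w \notin S2 -> f z w = 0.
  move=> z w zZ wZ wS; apply: fe; apply/negP => ezw; move: wZ; rewrite !inE.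
  move: zZ; rewrite inE => zZ.
  by rewrite (connect_trans zZ (connect1 (e:=e') (x:=z) (y:=w) _)) //= ezw wS.
pose inn x := \sum_(u : N) f u x.
pose out x := \sum_(w : N) f x w.
have key : \sum_(z in Z) (out z - inn z) = out s.
  rewrite (bigD1 s) //= big1 ?addr0.
    suff -> : inn s = 0 by rewrite subr0.
    by rewrite /inn big1 // => u _; apply: fe.
  move=> z /andP[zZ zs]; have zt : z != t.
    by apply/negP => /eqP zt; move: zZ; rewrite zt (negbTE tZ).
  by have [h _] := fc z zs zt; rewrite /out /inn h subrr.
have split : \sum_(z in Z) (out z - inn z) =
   \sum_(z in Z) \sum_(w | w \notin Z) f z w - \sum_(z in Z) \sum_(u | u \notin Z) f u z.
  rewrite sumrB /out /inn.
  rewrite (eq_bigr (fun z => \sum_(w in Z) f z w + \sum_(w | w \notin Z) f z w)); last first.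
    by move=> z _; rewrite (bigID (mem Z)).
  rewrite [X in _ - X](eq_bigr (fun z => \sum_(u in Z) f u z + \sum_(u | u \notin Z) f u z)); last first.
    by move=> z _; rewrite (bigID (mem Z)).
  rewrite !big_split /= (exchange_big _ _ _ (mem Z) (mem Z)) /=.
  by rewrite opprD addrACA subrr add0r.
have pos : 0 <= \sum_(z in Z) \sum_(u | u \notin Z) f u z.
  by apply: sumr_ge0 => z _; apply: sumr_ge0.
have b1 : \sum_(z in Z) \sum_(w | w \notin Z) f z w <= \sum_(z in Z) \sum_(w in S2) f z w.
  apply: ler_sum => z zZ.
  rewrite [X in X <= _]big_mkcond [X in _ <= X]big_mkcond; apply: ler_sum => w _.
  case: (boolP (w \in Z)) => wZ /=; first by case: ifP.
  by case: ifP => // wS; rewrite hzero // wS.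
have b2 : \sum_(z in Z) \sum_(w in S2) f z w <= \sum_(w in S2) inn w.
  rewrite exchange_big /=; apply: ler_sum => w _.
  rewrite /inn [X in _ <= X](bigID (mem Z)) /= lerDl.
  by apply: sumr_ge0.
have b3 : \sum_(w in S2) inn w <= #|S2|%:R.
  rewrite -sumr_const; apply: ler_sum => w; rewrite !inE => /and3P[wt ws _].
  by have [_ ->] := fc w ws wt.
have b4 : (#|S2|%:R : R) <= #|S|%:R.
  by rewrite ler_nat; apply: subset_leq_card; apply/subsetP => z; rewrite !inE => /and3P[].
rewrite -/(out s) -key split; lra.
Qed.

Lemma next_last_gen (x : N) p y : uniq (x :: rcons p y) -> next (x :: rcons p y) y = x.
Proof.
move=> u; have : (x \notin rcons p y) && uniq (rcons p y) by [].
rewrite mem_rcons inE negb_or rcons_uniq => /andP[/andP[hxy _] /andP[hyp _]].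
have yin : y \in x :: rcons p y by rewrite inE mem_rcons inE eqxx !orbT.
rewrite next_nth yin.
have -> : index y (x :: rcons p y) = (size p).+1.
  rewrite -cat1s index_cat inE eq_sym (negbTE hxy) -cats1 index_cat (negbTE hyp) /=.
  by rewrite eqxx addn0.
by rewrite /= nth_default // size_rcons.
Qed.

Lemma sum_ind (b : bool) (n : N) : \sum_(w : N) (b && (n == w))%:R = b%:R :> R.
Proof.
rewrite (bigD1 n) //= eqxx andbT big1 ?addr0 // => w /negbTE nw.
by rewrite eq_sym nw andbF.
Qed.

Lemma paths_flow (I : finType) (K : {set I}) (W : I -> N * seq N) :
  (forall i, i \in K -> wAB e A B (W i) /\ uniq (verts (W i))) ->
  (forall i j z, i \in K -> j \in K -> z \in verts (W i) -> z \in verts (W j) -> i = j) ->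
  exists f, gflow f /\ \sum_(w : N) f s w = #|K|%:R.
Proof.
move=> hW hd.
pose c i := s :: rcons (verts (W i)) t.
pose f x y := \sum_(i in K) (((x \in c i) && (x != t)) && (next (c i) x == y))%:R : R.
have cu : forall i, i \in K -> uniq (c i).
  move=> i iK; have [hw hu] := hW i iK; have [ns nt] := walk_nost hw.
  by rewrite /c cons_uniq mem_rcons inE negb_or snt ns rcons_uniq nt hu.
pose e' := [rel x y | e x y || ((x == t) && (y == s))].
have ccyc : forall i, i \in K -> cycle e' (c i).
  move=> i iK; have [hw _] := hW i iK; rewrite /c /verts.
  case: (W i) hw => a q /and3P[ha hp hl].
  rewrite /cycle rcons_path last_rcons /= !eqxx orbT andbT rcons_path /=.
  rewrite /= !inE in ha hp hl; apply/and3P; split; first by rewrite ha.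
    by apply: sub_path hp => x y /= ->.
  by rewrite hl.
have hout : forall x, \sum_(w : N) f x w = \sum_(i in K) ((x \in c i) && (x != t))%:R.
  move=> x; rewrite /f exchange_big; apply: eq_bigr => i _; exact: sum_ind.
have hin : forall x, \sum_(u : N) f u x = \sum_(i in K) ((x \in c i) && (prev (c i) x != t))%:R.
  move=> x; rewrite /f exchange_big; apply: eq_bigr => i iK.
  rewrite -(sum_ind _ (prev (c i) x)); apply: eq_bigr => u _.
  have cui := cu i iK; congr ((nat_of_bool _)%:R); apply/idP/idP.
    case/andP => /andP[uc ut] /eqP <-.
    by rewrite mem_next uc (prev_next cui) ut eqxx.
  case/andP => /andP[xc pt] /eqP <-.
  by rewrite mem_prev xc pt (next_prev cui) eqxx.
have mint : forall i x, x != s -> x != t -> (x \in c i) = (x \in verts (W i)).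
  move=> i x xs xt; by rewrite /c inE mem_rcons inE (negbTE xs) (negbTE xt).
have bound : forall x, x != s -> x != t -> \sum_(i in K) (x \in c i)%:R <= 1 :> R.
  move=> x xs xt.
  case: (pickP (fun i => (i \in K) && (x \in c i))) => [i0 /andP[i0K xi0] | none].
    rewrite (bigD1 i0) //= big1 ?addr0 ?xi0 // => j /andP[jK ji0].
    case: (boolP (x \in c j)) => // xj; case/negP: ji0; apply/eqP.
    by apply: (hd j i0 x) => //; rewrite -mint.
  rewrite big1 ?ler01 // => i iK; move: (none i); rewrite iK /= => ->.
  by [].
exists f; split; last first.
  rewrite hout (eq_bigr (fun _ => 1)) ?sumr_const // => i _.
  by rewrite mem_head snt.
split.
- by move=> x y; apply: sumr_ge0 => i _; apply: ler0n.
- move=> x y nexy; apply: big1 => i iK.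
  case: (boolP ((x \in c i) && (x != t) && (next (c i) x == y))) => // /andP[/andP[xc xt] /eqP nx].
  have := next_cycle (ccyc i iK) xc; rewrite nx /= (negbTE xt) /= orbF => exy.
  by rewrite exy in nexy.
- move=> x xs xt.
  have h1 : \sum_(u : N) f u x = \sum_(i in K) (x \in c i)%:R.
    rewrite hin; apply: eq_bigr => i iK; case: (boolP (x \in c i)) => xc; last by [].
    rewrite andTb; case: (prev (c i) x =P t) => pt; last by [].
    have := next_prev (cu i iK) x; rewrite pt /c next_last_gen.
      by move=> sx; move: xs; rewrite sx eqxx.
    by move: (cu i iK).
  have h2 : \sum_(w : N) f x w = \sum_(i in K) (x \in c i)%:R.
    by rewrite hout; apply: eq_bigr => i iK; rewrite xt andbT.
  by rewrite h1 h2; split => //; apply: bound.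
Qed.

End GFlow.

Lemma card_pairs m (F : 'I_m -> {set 'I_m}) :
  #|[set p : 'I_m * 'I_m | p.2 \in F p.1]| = \sum_(v : 'I_m) #|F v|.
Proof.
rewrite -sum1_card (eq_bigr (fun v => \sum_(w in F v) 1)); last by move=> v _; rewrite sum1_card.
rewrite pair_big_dep /=; apply: eq_bigl => p; by rewrite inE.
Qed.

Lemma wAB_eq (T : finType) (E1 E2 : rel T) A B w : E1 =2 E2 -> wAB E1 A B w = wAB E2 A B w.
Proof. by move=> h; rewrite /wAB (eq_path h). Qed.

Lemma menger_rel (T : finType) (E : rel T) A B : exists S K P,
  [/\ sepAB E A B S, systemAB E A B K P & #|S| <= #|K|].
Proof.
have [S [K [P [h1 [h2 h3] h4]]]] := menger [set p : T * T | E p.1 p.2] A B.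
have he : erel [set p : T * T | E p.1 p.2] =2 E by move=> x y; rewrite /erel /= inE.
exists S, K, P; split => //.
  by move=> w hw; apply: h1; rewrite (wAB_eq _ _ _ he).
split => // k kK; rewrite -(wAB_eq _ _ _ he); exact: h2.
Qed.

Section Graph.
Variables (m : nat) (D B : rel 'I_m).
Hypothesis hBsym : symmetric B.
Local Notation N := (fnode m).
Local Notation E := (fedge D B).
Local Notation As := [set a : N | fedge D B (fs m) a].
Local Notation Bs := [set b : N | fedge D B b (ft m)].

Lemma fe_s x : ~~ E x (fs m).
Proof. by case: x => [[[]|[]]|[[v w]|[v w]]]. Qed.
Lemma fe_t y : ~~ E (ft m) y.
Proof. by case: y => [[[]|[]]|[[v w]|[v w]]]. Qed.
Lemma fe_st : ~~ E (fs m) (ft m).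
Proof. by []. Qed.
Lemma snt : fs m != ft m.
Proof. by []. Qed.

Lemma Rpath v h q : path E (fR v h) q -> E (last (fR v h) q) (ft m) ->
  exists p, q = map (fR v) p /\ path D h p.
Proof.
elim: q h => [|r q IH] h /=; first by exists [::].
case: r => [[[]|[]]|[[a b]|[a u]]] //=.
  move=> /andP[_ hq]; case: q hq {IH} => [|r' q'] /=; first by [].
  by [].
move=> /andP[/andP[/eqP av du] hq] hl; subst a.
have [p [-> hp]] := IH u hq hl; exists (u :: p); by rewrite /= du hp.
Qed.

Lemma walk_dec w : wAB E As Bs w -> exists v1 v2 v h p,
  [/\ w = (fL v1 v2, fR v h :: map (fR v) p), L_valid B v1 v2, path D h p,
      last h p \in pa D v &
      ((v == v1) && ((h == v2) || B v2 h)) || ((v == v2) && ((h == v1) || B v1 h))].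
Proof.
case: w => a q /and3P[ha hp hl]; rewrite /= !inE in ha hp hl.
case: a ha hp hl => [[[]|[]]|[[v1 v2]|[x y]]] //= hv.
case: q => [|r q] /=; first by [].
case: r => [[[]|[]]|[[a b]|[v h]]] //=; rewrite hv /= => /andP[hc hq] hl.
have [p [ep hp]] := Rpath hq hl.
exists v1, v2, v, h, p; split => //; first by rewrite ep.
by move: hl; rewrite ep last_map.
Qed.

Definition Lnode (v y : 'I_m) : N := if (v < y)%N then fL v y else fL y v.

Lemma Lnode_inj v y v' y' : Lnode v y = Lnode v' y' ->
  (v = v' /\ y = y') \/ (v = y' /\ y = v').
Proof. by rewrite /Lnode; do 2 case: ifP => _; case=> -> ->; auto. Qed.

Lemma Lnode_sym v y : v != y -> Lnode v y = Lnode y v.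
Proof.
rewrite /Lnode => hvy; case: ltngtP => // /val_inj vy.
by rewrite vy eqxx in hvy.
Qed.

Lemma LnodeA v y : v != y -> ~~ B y v -> E (fs m) (Lnode v y).
Proof.
rewrite /Lnode => hvy nb; case: ltngtP => [lt|lt|/val_inj vy] /=.
- by rewrite /L_valid lt hBsym nb.
- by rewrite /L_valid lt nb.
- by rewrite vy eqxx in hvy.
Qed.

Lemma Ledge v y h : v != y -> ~~ B y v -> (h == y) || B y h -> E (Lnode v y) (fR v h).
Proof.
move=> hvy nb hc; have := LnodeA hvy nb; rewrite /Lnode.
case: ltngtP => [lt|lt|/val_inj vy] /= ->; rewrite /= ?eqxx /= ?hc //.
all: by rewrite orbT.
Qed.

Lemma pathR v h p : path E (fR v h) (map (fR v) p) = path D h p.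
Proof. by elim: p h => //= a p IH h; rewrite IH eqxx. Qed.

Lemma fR_inj v : injective (@fR m v).
Proof. by move=> a b []. Qed.

Lemma card_Bs : #|Bs| = \sum_(v : 'I_m) #|pa D v|.
Proof.
rewrite -card_pairs -(card_in_imset (f := fun p : 'I_m * 'I_m => fR p.1 p.2)); last first.
  by move=> [a b] [c d] _ _ [-> ->].
apply: eq_card => x; rewrite inE.
case: x => [[[]|[]]|[[a b]|[v w]]] /=; try by (apply/esym/negbTE/negP => /imsetP [p _ e]; discriminate e).
apply/idP/imsetP => [hw|[p]]; first by exists (v, w) => //; rewrite in_set.

by rewrite in_set => hp [-> ->].
Qed.

Lemma shorten_w a q : wAB E As Bs (a, q) ->
  [/\ wAB E As Bs (a, shorten a q), uniq (a :: shorten a q) & {subset shorten a q <= q}].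
Proof.
case/and3P => /= ha hp; move: ha; case/shortenP: hp => p' hp' hu hsub ha hl.
by split => //; apply: wABI.
Qed.

Lemma family_walks (Yf : 'I_m -> {set 'I_m}) :
  (forall v, HTC D B (Yf v) v) -> ~ (exists v w, [/\ v != w, v \in Yf w & w \in Yf v]) ->
  exists (K : {set 'I_m * 'I_m}) (W : 'I_m * 'I_m -> N * seq N),
  [/\ forall k, k \in K -> wAB E As Bs (W k) /\ uniq (verts (W k)),
      forall i j z, i \in K -> j \in K -> z \in verts (W i) -> z \in verts (W j) -> i = j &
      #|K| = \sum_(v : 'I_m) #|pa D v|].
Proof.
move=> hH hnr.
have : forall v, exists T : 'I_m -> halftrek m,
    [/\ forall y, y \in Yf v -> is_halftrek D B y (T y),
        {in Yf v &, injective (fun y => ht_target (T y))},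
        [set ht_target (T y) | y in Yf v] = pa D v &
        forall y y', y \in Yf v -> y' \in Yf v -> y != y' ->
          [disjoint pred1 y & pred1 y'] /\
          [disjoint ht_right (T y) & ht_right (T y')]].
  by move=> v; case: (hH v) => _ _ [T hT]; exists T.
move/fchoice => [Tv hTv].
have hyv : forall v y, y \in Yf v -> v != y /\ ~~ B y v.
  move=> v y hy; case: (hH v) => _ /setP /(_ y); rewrite !inE hy /= => /negbT.
  by rewrite negb_or eq_sym => /andP[].
pose K := [set p : 'I_m * 'I_m | p.2 \in Yf p.1].
pose raw (k : 'I_m * 'I_m) : N * seq N :=
  (Lnode k.1 k.2, map (fR k.1) (ht_right (Tv k.1 k.2))).
have hraw : forall k, k \in K -> wAB E As Bs (raw k).
  move=> [v y]; rewrite inE /= => hy; have [vy nb] := hyv v y hy.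
  have [h1 _ h3 _] := hTv v.
  have ht := h1 y hy.
  have htg : ht_target (Tv v y) \in pa D v by rewrite -h3; apply: imset_f.
  rewrite /raw /ht_right /=; move: ht htg; case: (Tv v y) => [[bi h] p].
  rewrite /is_halftrek /ht_target /= => /andP[hp hb] hl.
  apply: wABI; first by rewrite in_set; exact: (LnodeA vy nb).
    rewrite /= pathR hp andbT; apply: Ledge => //.
    by move: hb; case: bi => [->|/eqP ->]; rewrite ?orbT ?eqxx.
  by rewrite inE /= last_map.
pose W k := ((raw k).1, shorten (raw k).1 (raw k).2).
have hW : forall k, k \in K -> [/\ wAB E As Bs (W k), uniq (verts (W k)) &
    {subset verts (W k) <= verts (raw k)}].
  move=> k kK; have := hraw k kK; rewrite /W; case: (raw k) => a q /shorten_w [h1 h2 h3].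
  split => // z; rewrite /verts /= !inE => /orP[->//|/h3 ->]; by rewrite orbT.
exists K, W; split.
- by move=> k kK; case: (hW k kK).
- move=> [v y] [v' y'] z; rewrite !inE /= => hy hy' z1 z2.
  have kK : (v, y) \in K by rewrite inE.
  have kK' : (v', y') \in K by rewrite inE.
  have {}z1 : z \in verts (raw (v, y)) by have [_ _ hs] := hW _ kK; exact: hs.
  have {}z2 : z \in verts (raw (v', y')) by have [_ _ hs] := hW _ kK'; exact: hs.
  have {}z1 : (z == Lnode v y) || (z \in map (fR v) (ht_right (Tv v y))) := z1.
  have {}z2 : (z == Lnode v' y') || (z \in map (fR v') (ht_right (Tv v' y'))) := z2.
  have nLR : forall a b c d, (fR a b == Lnode c d) = false.
    by move=> a b c d; rewrite /Lnode; case: ifP.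
  move: z1 z2.
  case/orP => [/eqP -> | /mapP [a ha ->]]; case/orP => [/eqP | /mapP [a' ha']].
  + move/Lnode_inj => [[-> ->] // | [e1 e2]]; subst v' y'.
    case: hnr; exists v, y; split => //; first by case: (hyv v y hy).
  + by move=> e; move: (nLR v' a' v y); rewrite -e eqxx.
  + by move=> e; move: (nLR v a v' y'); rewrite e eqxx.
  + case => ev ea; subst v' a'.
    case: (y =P y') => [-> //| /eqP yy'].
    have [_ _ _ h4] := hTv v; have [_ ] := h4 y y' hy hy' yy'.
    by rewrite disjoint_has => /hasPn /(_ a ha); rewrite ha'.
- by rewrite card_pairs; apply: eq_bigr => v _; case: (hH v).
Qed.

Definition Rfst (x : N) (d : 'I_m) : 'I_m :=
  match x with inr (inr (v, _)) => v | _ => d end.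
Definition Rsnd (x : N) (d : 'I_m) : 'I_m :=
  match x with inr (inr (_, w)) => w | _ => d end.
Definition decb (w : N * seq N) (v y : 'I_m) : bool :=
  (Rfst (head (ft m) w.2) v == v) && ((w.1 == fL v y) || (w.1 == fL y v)).

Section Decode.
Variables (K : {set N}) (P : N -> N * seq N).
Hypothesis sysP : systemAB E As Bs K P.
Hypothesis cardK : (\sum_(v : 'I_m) #|pa D v| <= #|K|)%N.

Lemma hdis k k' z : k \in K -> k' \in K -> z \in verts (P k) -> z \in verts (P k') -> k = k'.
Proof. by case: sysP => _; apply. Qed.

Lemma decode_full k v y : k \in K -> decb (P k) v y -> exists h p,
  [/\ P k = (Lnode v y, fR v h :: map (fR v) p), path D h p, last h p \in pa D v,
      (h == y) || B y h & (v != y) && ~~ B y v].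
Proof.
move=> kK; case: sysP => hw _.
have [v1 [v2 [v' [h [p [hP hv hp hl hc]]]]]] := walk_dec (hw k kK).
rewrite hP /decb /= => /andP[/eqP vv hL]; subst v'.
exists h, p; move: hv hc; rewrite /L_valid.
case/orP: hL => /eqP [e1 e2]; subst v1 v2 => /andP[lt nb] hc.
- have vy : v != y by apply/eqP => e; move: lt; rewrite e ltnn.
  split => //; first by rewrite /Lnode lt.
    by move: hc; rewrite eqxx (negbTE vy) /= orbF.
  by rewrite vy -hBsym.
- have vy : v != y by apply/eqP => e; move: lt; rewrite e ltnn.
  split => //; first by rewrite /Lnode ltnNge (ltnW lt).
    by move: hc; rewrite eqxx (negbTE vy).
  by rewrite vy.
Qed.

Definition Yf (v : 'I_m) : {set 'I_m} := [set y | [exists k in K, decb (P k) v y]].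
Definition ix (v y : 'I_m) : N := odflt (fs m) [pick k in K | decb (P k) v y].
Definition Tr (v y : 'I_m) : halftrek m :=
  let q := (P (ix v y)).2 in let h := Rsnd (head (ft m) q) y in
  (h != y, h, map (fun x => Rsnd x y) (behead q)).

Lemma ix_spec v y : y \in Yf v -> ix v y \in K /\ decb (P (ix v y)) v y.
Proof.
rewrite inE => /existsP[k /andP[kK hk]]; rewrite /ix.
case: pickP => [k' /andP[]//| none]; by move: (none k); rewrite kK hk.
Qed.

Lemma Tr_spec v y : y \in Yf v -> exists h p,
  [/\ P (ix v y) = (Lnode v y, fR v h :: map (fR v) p), Tr v y = (h != y, h, p),
      path D h p && (last h p \in pa D v), (h == y) || B y h & (v != y) && ~~ B y v].
Proof.
move/ix_spec => [kK hd]; have [h [p [hP h1 h2 h3 h45]]] := decode_full kK hd.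
exists h, p; split => //; last by rewrite h1 h2.
rewrite /Tr hP /=.
have -> : map (fun x => Rsnd x y) (map (fR v) p) = p by elim: p {h1 h2 hP} => //= a p ->.
by [].
Qed.

Lemma ends_cover x : E x (ft m) -> exists2 k, k \in K & last (P k).1 (P k).2 = x.
Proof.
pose endf k := last (P k).1 (P k).2.
have inj : {in K &, injective endf}.
  move=> k k' kK k'K e; apply: (hdis (z := endf k)) => //; first exact: mem_last.
  by rewrite e; exact: mem_last.
have sub : endf @: K \subset Bs.
  by apply/subsetP => z /imsetP[k kK ->]; case: sysP => hw _; case/and3P: (hw k kK).
have eq : endf @: K = Bs.
  by apply/eqP; rewrite eqEcard sub /= card_in_imset // card_Bs.
move=> hx; have xB : x \in Bs by rewrite inE.
by move: xB; rewrite -eq => /imsetP[k kK ->]; exists k.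
Qed.


Lemma in_vertsR (a : N) v h p z : z \in h :: p -> fR v z \in verts (a, fR v h :: map (fR v) p).
Proof.
move=> hz; rewrite /verts inE; apply/orP; right.
by have := map_f (fR v) hz.
Qed.

Lemma Yf_HTC v : HTC D B (Yf v) v.
Proof.
have inj : {in Yf v &, injective (fun y => ht_target (Tr v y))}.
  move=> y y' hy hy'.
  have [h [p [hP hT _ _ /andP[vy _]]]] := Tr_spec hy.
  have [h' [p' [hP' hT' _ _ _]]] := Tr_spec hy'.
  rewrite /ht_target hT hT' /= => el.
  have [kK _] := ix_spec hy; have [kK' _] := ix_spec hy'.
  have i1 : fR v (last h p) \in verts (P (ix v y)).
    by rewrite hP; apply: in_vertsR; exact: mem_last.
  have i2 : fR v (last h p) \in verts (P (ix v y')).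
    by rewrite hP' el; apply: in_vertsR; exact: mem_last.
  have e := hdis kK kK' i1 i2.
  move: hP'; rewrite -e hP => [[]] /Lnode_inj [[_ ->] //| [ey ev]] _.
  by rewrite ev eqxx in vy.
have img : [set ht_target (Tr v y) | y in Yf v] = pa D v.
  apply/setP => z; apply/imsetP/idP => [[y hy ->] | hz].
    by have [h [p [_ hT /andP[_ hl] _ _]]] := Tr_spec hy; rewrite /ht_target hT.
  have [k kK hk] := ends_cover (x := fR v z) hz.
  case: sysP => hw _.
  have [v1 [v2 [v' [h [p [hP hv hp hl hc]]]]]] := walk_dec (hw k kK).
  move: hk; rewrite hP /= last_map => [[ev ez]]; subst v'.
  pose y := if v == v1 then v2 else v1.
  have hdec : decb (P k) v y.
    rewrite hP /decb /= eqxx /= /y; case: (v =P v1) => [<-|nv1]; first by rewrite eqxx.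
    move: hc; case: (v =P v1) => //= _ /andP[/eqP -> _]; by rewrite eqxx orbT.
  have hy : y \in Yf v by rewrite inE; apply/existsP; exists k; rewrite kK hdec.
  exists y => //.
  have [h' [p' [hP' hT' _ _ _]]] := Tr_spec hy.
  have [h'' [p'' [hP'' _ _ _ _]]] := decode_full kK hdec.
  have [ixK _] := ix_spec hy.
  have e : ix v y = k.
    apply: (hdis (z := Lnode v y)) => //; first by rewrite hP'; exact: mem_head.
    by rewrite hP''; exact: mem_head.
  move: hP'; rewrite e hP => [[_ eh ep]].
  rewrite /ht_target hT' /=; rewrite -eh -ez; congr last.
  by apply: (inj_map (@fR_inj v)); rewrite ep.
split.
- by rewrite -img card_in_imset.
- apply/setP => y; rewrite in_setI in_set0; case hy: (y \in Yf v) => //=.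
  have [h [p [_ _ _ _ /andP[vy nb]]]] := Tr_spec hy.
  by rewrite !inE eq_sym (negbTE vy) (negbTE nb).
exists (Tr v); split => //.
- move=> y hy; have [h [p [_ hT /andP[hp _] hc _]]] := Tr_spec hy.
  rewrite hT /is_halftrek /= hp /=; case: (h =P y) => [->|/eqP hy'] /=.
    by [].
  by move: hc; rewrite (negbTE hy').
- move=> y y' hy hy' yy'; split.
    by rewrite disjoint1 inE.
  have [h [p [hP hT _ _ _]]] := Tr_spec hy.
  have [h' [p' [hP' hT' _ _ _]]] := Tr_spec hy'.
  rewrite hT hT' /ht_right /= disjoint_has; apply/hasPn => z zr; apply/negP => zr'.
  have [kK _] := ix_spec hy; have [kK' _] := ix_spec hy'.
  have i1 : fR v z \in verts (P (ix v y)) by rewrite hP; apply: in_vertsR.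
  have i2 : fR v z \in verts (P (ix v y')) by rewrite hP'; apply: in_vertsR.
  have e := hdis kK kK' i1 i2.
  move: hP'; rewrite -e hP => [[]] /Lnode_inj [[_ eyy] | [ey ev]] _.
    by rewrite eyy eqxx in yy'.
  have [_ [_ [_ _ _ _ /andP[vy _]]]] := Tr_spec hy.
  by rewrite ev eqxx in vy.
Qed.

Lemma Yf_norecip : ~ (exists v w, [/\ v != w, v \in Yf w & w \in Yf v]).
Proof.
move=> [v [w [vw hv hw]]].
have [h [p [hP _ _ _ _]]] := Tr_spec hv.
have [h' [p' [hP' _ _ _ _]]] := Tr_spec hw.
have [kK _] := ix_spec hv; have [kK' _] := ix_spec hw.
have i1 : Lnode v w \in verts (P (ix w v)).
  by rewrite hP Lnode_sym ?mem_head // eq_sym.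
have i2 : Lnode v w \in verts (P (ix v w)) by rewrite hP' mem_head.
have e := hdis kK kK' i1 i2.
move: hP'; rewrite -e hP => [[_ ewv _]].
by rewrite ewv eqxx in vw.
Qed.

End Decode.
End Graph.

Local Open Scope ring_scope.

Theorem mainTheorem10 (R : realFieldType) (m : nat) (D B : rel 'I_m)
  (hD : irreflexive D) (hB : irreflexive B) (hBsym : symmetric B) :
  HTC_infinite_to_one D B <->
  exists f : fnode m -> fnode m -> R,
    is_max_flow D B f /\ flow_size f < (\sum_(v < m) #|pa D v|)%:R.
Proof.
have fs_ := @fe_s m D B; have ft_ := @fe_t m D B.
have fst_ := @fe_st m D B; have snt_ := @snt m.
split.
- move=> hinf.
  have [S [K [P [sepS sysP cSK]]]] :=
    menger_rel (fedge D B) [set a | fedge D B (fs m) a] [set b | fedge D B b (ft m)].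
  pose W k := ((P k).1, shorten (P k).1 (P k).2).
  have hW : forall k, k \in K -> [/\ wAB (fedge D B) [set a | fedge D B (fs m) a]
       [set b | fedge D B b (ft m)] (W k), uniq (verts (W k)) &
       {subset verts (W k) <= verts (P k)}].
    move=> k kK; case: sysP => hw _; have := hw k kK; rewrite /W.
    case: (P k) => a q /shorten_w [h1 h2 h3]; split => // z.
    by rewrite /verts /= !inE => /orP[->//|/h3 ->]; rewrite orbT.
  have hW' : forall k, k \in K -> wAB (fedge D B) [set a | fedge D B (fs m) a]
       [set b | fedge D B b (ft m)] (W k) /\ uniq (verts (W k)).
    by move=> k kK; case: (hW k kK).
  have dis : forall i j z, i \in K -> j \in K -> z \in verts (W i) ->
      z \in verts (W j) -> i = j.
    move=> i j z iK jK zi zj; case: sysP => _ hd; apply: (hd i j z) => //.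
      by case: (hW i iK) => _ _ /(_ z zi).
    by case: (hW j jK) => _ _ /(_ z zj).
  have [f [gf vf]] := paths_flow fs_ ft_ snt_ R hW' dis.
  exists f; split.
    split; first exact: gf.
    move=> g hg; rewrite /flow_size vf.
    apply: le_trans (cut_bound fs_ ft_ fst_ snt_ hg sepS) _.
    by rewrite ler_nat.
  rewrite /flow_size vf ltr_nat ltnNge; apply/negP => hle.
  case: (hinf (Yf K P)) => [[v hv] | [v [w hr]]].
    by apply: hv; apply: Yf_HTC.
  by apply: (Yf_norecip hBsym sysP); exists v, w.
- move=> [f [[hf hmax] hlt]] Yf.
  case: (Classical_Prop.classic (exists v, ~ HTC D B (Yf v) v)) => [h|h]; first by left.
  case: (Classical_Prop.classic (exists v w, [/\ v != w, v \in Yf w & w \in Yf v])) => [h'|h'].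
    by right.
  exfalso.
  have hall : forall v, HTC D B (Yf v) v.
    by move=> v; apply: Classical_Prop.NNPP => hn; apply: h; exists v.
  have [K [W [hW dis cK]]] := family_walks hBsym hall h'.
  have [g [gg vg]] := paths_flow fs_ ft_ snt_ R hW dis.
  have := hmax g gg; rewrite /flow_size vg cK => hle.
  by move: (le_lt_trans hle hlt); rewrite ltxx.
Qed.
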